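(* Let $f:\mathcal D_n^+\to\mathcal D_n^+$ be weakly monotonic (non-decreasing or non-increasing for the entrywise order on diagonal matrices) and bounded from below and above, i.e. there are $0<\delta_m\le\delta_M$ with $\delta_mI_n\le f(\Delta)\le\delta_MI_n$ for all $\Delta$. Suppose $f$ is stable and satisfies $d_s(f(\Delta),f(\Delta'))<d_s(\Delta,\Delta')$ for all $\Delta\ne\Delta'$ in $\mathcal D_n^+$. Then there exists a unique $\Delta^*\in\mathcal D_n^+$ with $\Delta^*=f(\Delta^* )$.
   Context: $\mathcal D_n^+$ is the set of $n\times n$ diagonal matrices with positive diagonal entries. $d_s(\Delta,\Delta')=\max_i\frac{|\Delta_i-\Delta'_i|}{\sqrt{\Delta_i\Delta'_i}}$ (stable semi-metric). A map $f:\mathcal D_n^+\to\mathcal D_n^+$ is stable if $d_s(f(\Delta),f(\Delta'))\le d_s(\Delta,\Delta')$ for all $\Delta,\Delta'$. *)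

(* Defs.v *)
From HB Require Import structures.
From mathcomp Require Import all_boot all_order all_algebra.
From mathcomp Require Import reals.
Set Implicit Arguments. Unset Strict Implicit. Unset Printing Implicit Defensive.
Import Order.TTheory GRing.Theory Num.Theory.
Local Open Scope ring_scope.

Definition Dpos (R : realType) (n : nat) (D : 'M[R]_n) : Prop :=
  is_diag_mx D /\ forall i : 'I_n, 0 < D i i.

(* stable semi-metric d_s(D,D') = max_i |D_i - D'_i| / sqrt(D_i D'_i)
   (for n = 0 the empty max is 0) *)
Definition ds (R : realType) (n : nat) (D D' : 'M[R]_n) : R :=
  \big[Num.max/0]_(i < n) (`|D i i - D' i i| / Num.sqrt (D i i * D' i i)).

Definition dle (R : realType) (n : nat) (D D' : 'M[R]_n) : Prop :=
  forall i : 'I_n, D i i <= D' i i.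

Definition weakly_monotonic (R : realType) (n : nat) (f : 'M[R]_n -> 'M[R]_n) : Prop :=
  (forall D D', Dpos D -> Dpos D' -> dle D D' -> dle (f D) (f D')) \/
  (forall D D', Dpos D -> Dpos D' -> dle D D' -> dle (f D') (f D)).

Definition stable (R : realType) (n : nat) (f : 'M[R]_n -> 'M[R]_n) : Prop :=
  forall D D', Dpos D -> Dpos D' -> ds (f D) (f D') <= ds D D'.

(* Main.v *)
Require Import Defs.
From HB Require Import structures.
From mathcomp Require Import all_boot all_order all_algebra.
From mathcomp Require Import reals.
From mathcomp Require Import classical_sets.
Import Order.TTheory GRing.Theory Num.Theory.
Local Open Scope ring_scope.

Section Aux.
Variables (R : realType) (n : nat).

Lemma diag_eq (A B : 'M[R]_n) : is_diag_mx A -> is_diag_mx B ->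
  (forall i, A i i = B i i) -> A = B.
Proof.
move=> /is_diag_mxP dA /is_diag_mxP dB e; apply/matrixP => i j.
have [->|nij] := eqVneq i j; first exact: e.
by rewrite dA ?dB.
Qed.

Lemma scal_ii (c : R) (i : 'I_n) : (c%:M : 'M[R]_n) i i = c.
Proof. by rewrite mxE eqxx mulr1n. Qed.

Lemma KT (h : 'M[R]_n -> 'M[R]_n) (dm dM : R) :
  (forall D, Dpos D -> Dpos (h D)) ->
  (forall D D', Dpos D -> Dpos D' -> dle D D' -> dle (h D) (h D')) ->
  0 < dm ->
  (forall D, Dpos D -> dle (dm%:M) (h D) /\ dle (h D) (dM%:M)) ->
  exists D, Dpos D /\ D = h D.
Proof.
move=> hpos hmon dm0 hb.
pose S i : set R := fun x : R => exists D, Dpos D /\ dle D (h D) /\ x = D i i.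
pose Ds : 'M[R]_n := \matrix_(i, j) (if i == j then sup (S i) else 0).
have D0pos : Dpos (dm%:M : 'M[R]_n).
  split; first exact: scalar_mx_is_diag.
  by move=> i; rewrite scal_ii.
have S0 : forall i, S i dm.
  move=> i; exists dm%:M; split => //; split; last by rewrite scal_ii.
  exact: (hb _ D0pos).1.
have Sub : forall i, ubound (S i) dM.
  move=> i x [D [DP [Dle ->]]].
  apply: le_trans (Dle i) _; have := (hb D DP).2 i; by rewrite scal_ii.
have hs : forall i, has_sup (S i).
  by move=> i; split; [exists dm | exists dM].
have Dsii : forall i, Ds i i = sup (S i) by move=> i; rewrite mxE eqxx.
have Dsdiag : is_diag_mx Ds.
  apply/is_diag_mxP => i j nij; rewrite mxE ifF //; apply/negbTE; exact: nij.
have Dsge : forall i, dm <= Ds i i.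
  by move=> i; rewrite Dsii; apply: sup_upper_bound (hs i) _ (S0 i).
have DsP : Dpos Ds.
  by split => // i; apply: lt_le_trans dm0 (Dsge i).
have le1 : dle Ds (h Ds).
  move=> i; rewrite Dsii; apply: ge_sup; first by exists dm.
  move=> x [D [DP [Dle ->]]].
  apply: le_trans (Dle i) _; apply: hmon => // j.
  rewrite Dsii; apply: sup_upper_bound (hs j) _ _.
  by exists D.
have le2 : dle (h Ds) Ds.
  move=> i; rewrite Dsii; apply: sup_upper_bound (hs i) _ _.
  exists (h Ds); split; first exact: hpos.
  by split => //; apply: hmon => //; exact: hpos.
exists Ds; split => //.
apply: diag_eq => //; first exact: (hpos _ DsP).1.
by move=> i; apply/eqP; rewrite eq_le le1 le2.
Qed.

Lemma ds_sym (A B : 'M[R]_n) : ds A B = ds B A.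
Proof.
rewrite /ds; apply: eq_bigr => i _.
by rewrite distrC [A i i * _]mulrC.
Qed.

End Aux.

Theorem theorem3 (R : realType) (n : nat) (f : 'M[R]_n -> 'M[R]_n)
  (dm dM : R) :
  (forall D, Dpos D -> Dpos (f D)) ->
  weakly_monotonic f ->
  0 < dm -> dm <= dM ->
  (forall D, Dpos D -> dle (dm%:M) (f D) /\ dle (f D) (dM%:M)) ->
  stable f ->
  (forall D D', Dpos D -> Dpos D' -> D <> D' -> ds (f D) (f D') < ds D D') ->
  exists! D, Dpos D /\ D = f D.
Proof.
move=> fpos [mon|mon] dm0 dmM hb _ strict.
- have [D [DP DE]] := @KT R n f dm dM fpos mon dm0 hb.
  exists D; split => // D' [D'P D'E].
  have [//|/eqP ne] := eqVneq D D'.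
  have := strict D D' DP D'P ne.
  by rewrite -DE -D'E ltxx.
- have gpos : forall D, Dpos D -> Dpos (f (f D)) by move=> D /fpos /fpos.
  have gmon : forall D D', Dpos D -> Dpos D' -> dle D D' -> dle (f (f D)) (f (f D')).
    by move=> D D' DP D'P le; exact: (mon _ _ (fpos _ D'P) (fpos _ DP) (mon _ _ DP D'P le)).
  have gb : forall D, Dpos D -> dle (dm%:M) (f (f D)) /\ dle (f (f D)) (dM%:M).
    by move=> D /fpos /hb.
  have [D [DP DE]] := @KT R n (fun D => f (f D)) dm dM gpos gmon dm0 gb.
  move: DE => /= DE.
  have fix1 : D = f D.
    have [//|/eqP ne] := eqVneq D (f D).
    have := strict D (f D) DP (fpos _ DP) ne.
    by rewrite -DE ds_sym ltxx.
  exists D; split => // D' [D'P D'E].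
  have [//|/eqP ne] := eqVneq D D'.
  have := strict D D' DP D'P ne.
  by rewrite -fix1 -D'E ltxx.
Qed.
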